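(* Let $G'\le G''$ be finite abelian groups and let $k$ be a positive integer dividing $|G'|$. If $L$ is a subgroup of $G''$ with $[G'':L]=k$, then there exists a subgroup $K$ of $G'$ with $[G':K]=k$ and $K\subset L$. *)

(* Defs.v *)
From mathcomp Require Import all_boot all_fingroup.

(* Main.v *)
Require Import Defs.
From mathcomp Require Import all_boot all_fingroup.
From mathcomp Require Import all_solvable zify.
Set Implicit Arguments.
Unset Strict Implicit.
Unset Printing Implicit Defensive.
Local Open Scope group_scope.

Lemma ab_sub N : forall n (gT : finGroupType) (H : {group gT}), (n <= N)%N ->
  abelian H -> (n %| #|H|)%N -> exists K : {group gT}, K \subset H /\ #|K| = n.
Proof.
elim: N => [|N IH] n gT H.
  rewrite leqn0 => /eqP -> _; rewrite dvd0n => /eqP H0.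
  by have := cardG_gt0 H; rewrite H0.
move=> leN abH dvd.
have n_gt0 : (0 < n)%N.
  case: n {leN} dvd => // /[!dvd0n] /eqP H0.
  by have := cardG_gt0 H; rewrite H0.
case: (leqP n 1) => [n1|n_gt1].
  have -> : n = 1%N by apply/eqP; rewrite eqn_leq n1.
  by exists 1%G; rewrite sub1G cards1.
have pp := pdiv_prime n_gt1.
have pn := pdiv_dvd n.
set p := pdiv n in pp pn.
have [x xH ox] := Cauchy pp (dvdn_trans pn dvd).
set X := <[x]>%G.
have XH : X \subset H by rewrite cycle_subG.
have nXH : H \subset 'N(X) by apply: sub_abelian_norm.
have nsXH : X <| H by rewrite /normal XH.
have p_gt1 : (1 < p)%N by apply: prime_gt1.
have cX : #|X| = p by rewrite -ox.
have [Kb [KbS oKb]] : exists Kb : {group coset_of X}, Kb \subset H / X /\ #|Kb| = n %/ p.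
  apply: (IH (n %/ p)).
  - by rewrite -ltnS (leq_trans (ltn_Pdiv p_gt1 n_gt0) leN).
  - exact: quotient_abelian.
  - rewrite card_quotient // -(dvdn_pmul2r (prime_gt0 pp)) divnK //.
    by rewrite -cX mulnC Lagrange.
have [K defKb XK KH] := inv_quotientS nsXH KbS.
exists K; split => //.
have nXK : K \subset 'N(X) by apply: subset_trans nXH.
have := Lagrange XK; rewrite -card_quotient // -defKb oKb cX.
by rewrite mulnC divnK.
Qed.

Theorem lemma2 (gT : finGroupType) (G1 G2 L : {group gT}) (k : nat) :
  abelian G2 -> G1 \subset G2 ->
  0 < k -> (k %| #|G1|)%N ->
  L \subset G2 -> #|G2 : L| = k ->
  exists K : {group gT}, [/\ K \subset G1, #|G1 : K| = k & K \subset L].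
Proof.
move=> abG2 G12 k_gt0 kG1 LG2 iL.
have nLG2 : G2 \subset 'N(L) by apply: sub_abelian_norm.
have mk : (#|G1 : L| %| k)%N.
  rewrite -iL -!card_quotient //; last exact: subset_trans nLG2.
  by apply: cardSg; apply: quotientS.
set H := (G1 :&: L)%G.
have abH : abelian H by apply: abelianS abG2; rewrite subIset ?G12.
have HG1 : H \subset G1 by apply: subsetIl.
have eG1 := LagrangeI G1 L.
have [r kr] : exists r, k = (#|G1 : L| * r)%N.
  by exists (k %/ #|G1 : L|); rewrite mulnC divnK.
have [q Gq] : exists q, #|G1| = (k * q)%N.
  by exists (#|G1| %/ k); rewrite mulnC divnK.
have m_gt0 : (0 < #|G1 : L|)%N by apply: indexg_gt0.
have qH : (q %| #|H|)%N.
  apply/dvdnP; exists r.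
  apply/eqP; rewrite -(eqn_pmul2l m_gt0); apply/eqP.
  by rewrite /H /= mulnC eG1 Gq kr mulnA.
have [K [KH oK]] := ab_sub (leqnn q) abH qH.
have KG1 : K \subset G1 by apply: subset_trans HG1.
exists K; split => //; last by apply: subset_trans KH (subsetIr _ _).
have q_gt0 : (0 < q)%N by rewrite -oK cardG_gt0.
have := Lagrange KG1; rewrite oK Gq [(k * q)%N]mulnC => /eqP.
by rewrite eqn_pmul2l // => /eqP.
Qed.
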